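(* Let $a,b,c,d$ be integers with $a\le c$ and $b\ge d$. Then $$\mathrm{gf}(a,b,c,d)=\prod_{j=1}^{c-a}\frac{\left(Xq^{j-1-2b+a}+Yq^{-j+1+2d-a}\right)\left(1-q^{2(b-d)+2j}\right)}{2\left(1-q^{2j}\right)}.$$ In particular, specializing $X=Y=1$, $$\mathrm{gf}(a,b,c,d)\big|_{X=Y=1}=2^{a-c}q^{\frac12(a-c)(a+c-1-4d)}\frac{(-q^{2a-2b-2d};q^2)_{c-a}\,(q^{2b-2d+2};q^2)_{c-a}}{(q^2;q^2)_{c-a}}.$$
   Context: $X,Y,q$ are indeterminates and $(u;p)_n=\prod_{j=0}^{n-1}(1-up^j)$. Consider lattice paths in $\mathbb Z\times\mathbb Z$ using unit steps to the right, $(s,t)\to(s+1,t)$, and downward, $(s,t)\to(s,t-1)$. A right step from $(s,t)$ to $(s+1,t)$ has weight $\frac{Xq^{s-2t}+Yq^{2t-s}}{2}$, a down step has weight $1$, and the weight of a path is the product of the weights of its steps. $\mathrm{gf}(a,b,c,d)$ denotes the sum of weights of all such paths from $(a,b)$ to $(c,d)$. *)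

(* Defs.v *)
From HB Require Import structures.
From mathcomp Require Import all_boot all_order all_algebra.
Set Implicit Arguments. Unset Strict Implicit. Unset Printing Implicit Defensive.
Import Order.TTheory GRing.Theory Num.Theory.
Local Open Scope ring_scope.

Definition rstep_w (F : fieldType) (X Y q : F) (s t : int) : F :=
  (X * q ^ (s - 2 * t) + Y * q ^ (2 * t - s)) / 2.

(* weight of the path starting at (s,t) encoded by a sequence of steps:
   true = right step (s,t) -> (s+1,t), false = down step (s,t) -> (s,t-1) *)
Fixpoint path_w (F : fieldType) (X Y q : F) (s t : int) (p : seq bool) : F :=
  match p with
  | [::] => 1
  | true :: p' => rstep_w X Y q s t * path_w X Y q (s + 1) t p'
  | false :: p' => path_w X Y q s (t - 1) p'
  end.

(* gf(a,b,c,d): sum of weights of all right/down lattice paths from (a,b) to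
   (c,d).  Such a path has exactly (c-a) right steps and (b-d) down steps; if
   c < a or b < d there is no path and the sum is 0. *)
Definition gf (F : fieldType) (X Y q : F) (a b c d : int) : F :=
  if (a <= c) && (d <= b) then
    let m := `|c - a|%N in
    let n := (`|c - a| + `|b - d|)%N in
    \sum_(p : n.-tuple bool | count id p == m) path_w X Y q a b p
  else 0.

Definition qpoch (F : fieldType) (u p : F) (n : nat) : F :=
  \prod_(j < n) (1 - u * p ^+ j).

(* Main.v *)
Require Import Defs.
From HB Require Import structures.
From mathcomp Require Import all_boot all_order all_algebra.
From mathcomp Require Import zify ring.
Import Order.TTheory GRing.Theory Num.Theory.
Set Implicit Arguments. Unset Strict Implicit. Unset Printing Implicit Defensive.
Local Open Scope ring_scope.

Definition Hs (F : fieldType) (X Y q : F) (n : nat) (s t : int) (m : nat) : F :=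
  \sum_(p : n.-tuple bool | count id p == m) path_w X Y q s t p.

Lemma Hs_S (F : fieldType) (X Y q : F) n s t m :
  Hs X Y q n.+1 s t m =
  (if m is m'.+1 then rstep_w X Y q s t * Hs X Y q n (s+1) t m' else 0)
  + Hs X Y q n s (t-1) m.
Proof.
rewrite /Hs (reindex (fun xt : bool * n.-tuple bool => [tuple of xt.1 :: xt.2])) /=; last first.
  exists (fun p : n.+1.-tuple bool => (thead p, [tuple of behead p])).
    by move=> [x u] _ /=; congr pair; apply: val_inj.
  move=> p _; apply: val_inj => /=; by case/tupleP: p => x u.
have -> : \sum_(j : bool * n.-tuple bool | count id (j.1 :: j.2) == m)
      path_w X Y q s t (j.1 :: j.2)
   = \sum_(x : bool) \sum_(t' : n.-tuple bool | count id (x :: t') == m)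
      path_w X Y q s t (x :: t').
  rewrite pair_big_dep; apply: eq_big => [[x u]|[x u] _] //.
rewrite big_bool /=; congr (_ + _).
  case: m => [|m].
    by rewrite big_pred0 // => p; rewrite add1n.
  rewrite mulr_sumr; apply: eq_big => [p|p _] //.
Qed.

Lemma Hs_0 (F : fieldType) (X Y q : F) s t : Hs X Y q 0 s t 0 = 1.
Proof.
rewrite /Hs (eq_bigl (fun p => p == [tuple])) ?big_pred1_eq //.
by move=> p; rewrite tuple0 eqxx.
Qed.

Lemma Hs_big (F : fieldType) (X Y q : F) n s t m : (n < m)%N -> Hs X Y q n s t m = 0.
Proof.
move=> h; rewrite /Hs big_pred0 // => p.
apply/negbTE; rewrite neq_ltn; apply/orP; left.
by apply: leq_ltn_trans h; rewrite -{2}(size_tuple p) count_size.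
Qed.

Definition Den (F : fieldType) (q : F) (m : nat) : F :=
  \prod_(i < m) (1 - q ^+ (2 * i.+1)).
Definition Nn (F : fieldType) (q : F) (m k : nat) : F :=
  \prod_(i < m) (1 - q ^+ (2 * (k + i.+1))).
Definition fac (F : fieldType) (X Y q : F) (s t : int) (k i : nat) : F :=
  (X * q ^ (s - 2 * t) * q ^+ (2 * i) + Y * q ^ (2 * t - 2 * k%:Z - s)) / q ^+ i.
Definition NumC (F : fieldType) (X Y q : F) (s t : int) (m k : nat) : F :=
  (\prod_(i < m) fac X Y q s t k i) * Nn q m k / 2 ^+ m.

Lemma qadd (F : fieldType) (q : F) (e : int) (n : nat) : q != 0 ->
  q ^ (e + n%:Z) = q ^ e * q ^+ n.
Proof. by move=> hq; rewrite expfzDr // exprnP. Qed.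
Lemma qsub (F : fieldType) (q : F) (e : int) (n : nat) : q != 0 ->
  q ^ (e - n%:Z) = q ^ e / q ^+ n.
Proof. by move=> hq; rewrite expfzDr // -exprnN. Qed.

Lemma fac_s (F : fieldType) (X Y q : F) s t k i : q != 0 ->
  fac X Y q (s + 1) t k i = fac X Y q s t k i.+1.
Proof.
move=> hq; rewrite /fac.
have -> : s + 1 - 2 * t = (s - 2 * t) + (1%N)%:Z by lia.
have -> : 2 * t - 2 * k%:Z - (s + 1) = (2 * t - 2 * k%:Z - s) - (1%N)%:Z by lia.
rewrite qadd // qsub // !expr1 mulnS !exprS.
field; rewrite ?expf_neq0 ?mulf_neq0 //.
Qed.

Lemma fac_t (F : fieldType) (X Y q : F) s t k i : q != 0 ->
  fac X Y q s (t - 1) k i = fac X Y q s t k.+1 i.+1 * q.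
Proof.
move=> hq; rewrite /fac.
have -> : s - 2 * (t - 1) = (s - 2 * t) + (2%N)%:Z by lia.
have -> : 2 * t - 2 * (k.+1)%:Z - s = (2 * (t - 1) - 2 * k%:Z - s) by lia.
rewrite qadd // mulnS !exprS exprD.
field; rewrite ?expf_neq0 ?mulf_neq0 //.
Qed.

Lemma fac0 (F : fieldType) (X Y q : F) s t k :
  fac X Y q s t k 0 = X * q ^ (s - 2 * t) + Y * q ^ (2 * t - 2 * k%:Z - s).
Proof. by rewrite /fac !expr0 mulr1 divr1. Qed.

Lemma prodl (F : fieldType) (g : nat -> F) m :
  \prod_(i < m.+1) g i = g 0%N * \prod_(i < m) g i.+1.
Proof. by rewrite big_ord_recl. Qed.

Lemma prodr (F : fieldType) (g : nat -> F) m :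
  \prod_(i < m.+1) g i = \prod_(i < m) g i * g m.
Proof. by rewrite big_ord_recr. Qed.

Lemma Nn_r (F : fieldType) (q : F) m k :
  Nn q m.+1 k = Nn q m k * (1 - q ^+ (2 * (k + m.+1))).
Proof. by rewrite /Nn big_ord_recr. Qed.

Lemma Nn_l (F : fieldType) (q : F) m k :
  Nn q m.+1 k = (1 - q ^+ (2 * k.+1)) * Nn q m k.+1.
Proof.
rewrite /Nn (prodl (fun i => 1 - q ^+ (2 * (k + i.+1)))) addn1; congr (_ * _).
by apply: eq_bigr => i _; rewrite addSnnS.
Qed.

Lemma main_ind (F : fieldType) (X Y q : F) (h2 : (2:F) != 0) (hq : q != 0) n :
  forall s t m k, (m + k = n)%N -> Hs X Y q n s t m * Den q m = NumC X Y q s t m k.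
Proof.
elim: n => [|n IH] s t m k.
  case: m => // [] [] // _.
  by rewrite Hs_0 /Den /NumC /Nn !big_ord0 expr0 !mulr1 divr1.
case: m => [|m] hmk.
  rewrite Hs_S add0r.
  have IH' := IH s (t - 1) 0%N n erefl.
  by rewrite /NumC /Den /Nn !big_ord0 in IH' *.
have Drec : Den q m.+1 = Den q m * (1 - q ^+ (2 * m.+1)) by rewrite /Den big_ord_recr.
rewrite Hs_S Drec.
set f := fac X Y q s t.
case: k hmk => [|k] hmk.
  have hmn : m = n by lia.
  subst m.
  rewrite (Hs_big _ _ _ _ _ (ltnSn n)) addr0.
  rewrite -!mulrA (mulrA (Hs _ _ _ _ _ _ _)) (IH (s + 1) t n 0%N) ?addn0 //.
  rewrite /NumC (prodl (fac X Y q s t 0)) fac0 Nn_r add0n.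
  under eq_bigr => i _ do rewrite fac_s //.
  rewrite /rstep_w.
  have -> : 2 * t - 2 * (0%N)%:Z - s = 2 * t - s by lia.
  set P := \prod_(i < n) _.
  rewrite exprS.
  field; by rewrite ?expf_neq0 ?h2 ?hq.
have hmk' : (m + k.+1 = n)%N by lia.
have IH1 := IH (s + 1) t m k.+1 hmk'.
have IH2 := IH s (t - 1) m.+1 k ltac:(lia).
rewrite Drec in IH2.
rewrite mulrDl IH2 -!mulrA (mulrA (Hs _ _ _ _ _ _ _)) IH1.
set P := \prod_(i < m) fac X Y q s t k.+1 i.+1.
have E1 : \prod_(i < m) fac X Y q (s + 1) t k.+1 i = P.
  by apply: eq_bigr => i _; rewrite fac_s.
have E2 : \prod_(i < m.+1) fac X Y q s (t - 1) k i = P * fac X Y q s t k.+1 m.+1 * q ^+ m.+1.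
  under eq_bigr => i _ do rewrite fac_t //.
  rewrite big_split /= prodr_const card_ord.
  by rewrite (prodr (fun i => fac X Y q s t k.+1 i.+1)).
have E3 : \prod_(i < m.+1) fac X Y q s t k.+1 i = fac X Y q s t k.+1 0 * P.
  by rewrite (prodl (fac X Y q s t k.+1)).
rewrite /NumC E1 E2 E3 (Nn_r q m k.+1) (Nn_l q m k) fac0.
have -> : q ^+ (2 * (k.+1 + m.+1)) = q ^+ (2 * k.+1) * q ^+ (2 * m.+1) by rewrite mulnDr exprD.
set N := Nn q m k.+1.
rewrite /rstep_w /fac.
have -> : 2 * t - s = (2 * t - 2 * (k.+1)%:Z - s) + (2 * k.+1)%N%:Z by lia.
rewrite qadd //.
set w := q ^ (2 * t - 2 * (k.+1)%:Z - s).
set A := q ^+ (2 * k.+1). set B := q ^+ (2 * m.+1). set C := q ^+ m.+1.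
rewrite exprS.
field; by rewrite !expf_neq0 ?h2.
Qed.

Lemma part1 (F : fieldType) (X Y q : F) (a b c d : int)
  (h2 : (2 : F) != 0) (hq : q != 0)
  (hden : forall j : nat, (1 <= j <= `|c - a|)%N -> 1 - q ^ (2 * j%:Z) != 0)
  (hac : a <= c) (hbd : d <= b) :
  gf X Y q a b c d =
    \prod_(1 <= j < `|c - a|.+1)
      ((X * q ^ (j%:Z - 1 - 2 * b + a) + Y * q ^ (- j%:Z + 1 + 2 * d - a))
        * (1 - q ^ (2 * (b - d) + 2 * j%:Z))
        / (2 * (1 - q ^ (2 * j%:Z)))).
Proof.
set M := `|c - a|%N; set K := `|b - d|%N.
have hM : M%:Z = c - a by rewrite /M gez0_abs // subr_ge0.
have hK : K%:Z = b - d by rewrite /K gez0_abs // subr_ge0.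
have Dnz : Den q M != 0.
  rewrite /Den; apply/prodf_neq0 => i _.
  have := hden i.+1 ltac:(have := ltn_ord i; lia).
  have -> : 2 * (i.+1)%:Z = ((2 * i.+1)%N)%:Z by lia.
  by rewrite -exprnP.
rewrite /gf hac hbd /=.
rewrite -/M -/K -/(Hs X Y q (M + K) a b M).
apply: (mulIf Dnz); rewrite (@main_ind F X Y q h2 hq (M + K) a b M K erefl).
rewrite big_add1 /= big_mkord.
have pt : forall i : 'I_M,
   (X * q ^ ((i.+1)%:Z - 1 - 2 * b + a) + Y * q ^ (- (i.+1)%:Z + 1 + 2 * d - a))
        * (1 - q ^ (2 * (b - d) + 2 * (i.+1)%:Z))
        / (2 * (1 - q ^ (2 * (i.+1)%:Z)))
   = fac X Y q a b K i * (1 - q ^+ (2 * (K + i.+1))) / (2 * (1 - q ^+ (2 * i.+1))).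
  move=> i.
  have -> : (i.+1)%:Z - 1 - 2 * b + a = (a - 2 * b) + i%:Z by lia.
  have -> : - (i.+1)%:Z + 1 + 2 * d - a = (2 * b - 2 * K%:Z - a) - i%:Z by lia.
  have -> : 2 * (b - d) + 2 * (i.+1)%:Z = ((2 * (K + i.+1))%N)%:Z by lia.
  have -> : 2 * (i.+1)%:Z = ((2 * i.+1)%N)%:Z by lia.
  rewrite -!exprnP qadd // qsub //; congr (_ * _ / _).
  rewrite /fac mul2n -addnn exprD.
  field; by rewrite expf_neq0.
rewrite (eq_bigr _ (fun i _ => pt i)) prodf_div big_split /= [X in _ / X]big_split /= prodr_const card_ord.
rewrite /NumC /Nn /Den.
field; by rewrite ?expf_neq0 ?h2 ?Dnz.
Qed.

Lemma prod_qz (F : fieldType) (q : F) (hq : q != 0) (M : nat) (f : nat -> int) :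
  \prod_(i < M) q ^ (f i) = q ^ (\sum_(i < M) f i).
Proof.
elim: M => [|M IH]; first by rewrite !big_ord0 expr0z.
by rewrite !big_ord_recr /= IH expfzDr.
Qed.

Lemma sumi (x : int) (M : nat) :
  2 * \sum_(i < M) (x - i%:Z) = M%:Z * (2 * x - M%:Z + 1).
Proof.
elim: M => [|M IH]; first by rewrite big_ord0 mulr0 mul0r.
rewrite big_ord_recr /= mulrDr IH.
have -> : (M.+1)%:Z = M%:Z + 1 by lia.
ring.
Qed.

Unset Implicit Arguments.
Theorem mainTheorem7 (F : fieldType) (X Y q : F) (a b c d : int)
  (h2 : (2 : F) != 0) (hq : q != 0)
  (hden : forall j : nat, (1 <= j <= `|c - a|)%N -> 1 - q ^ (2 * j%:Z) != 0)
  (hac : a <= c) (hbd : d <= b) :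
  gf X Y q a b c d =
    \prod_(1 <= j < `|c - a|.+1)
      ((X * q ^ (j%:Z - 1 - 2 * b + a) + Y * q ^ (- j%:Z + 1 + 2 * d - a))
        * (1 - q ^ (2 * (b - d) + 2 * j%:Z))
        / (2 * (1 - q ^ (2 * j%:Z))))
  /\
  gf 1 1 q a b c d =
    (2 : F) ^ (a - c) * q ^ (((a - c) * (a + c - 1 - 4 * d)) %/ 2)%Z
    * qpoch (- q ^ (2 * a - 2 * b - 2 * d)) (q ^+ 2) `|c - a|
    * qpoch (q ^ (2 * b - 2 * d + 2)) (q ^+ 2) `|c - a|
    / qpoch (q ^+ 2) (q ^+ 2) `|c - a|.
Proof.
split; first exact: part1.
rewrite part1 //.
set M := `|c - a|%N.
have hM : M%:Z = c - a by rewrite /M gez0_abs // subr_ge0.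
have hD : forall i : 'I_M, 1 - q ^+ 2 * (q ^+ 2) ^+ i != 0.
  move=> i; have := hden i.+1 ltac:(have := ltn_ord i; lia).
  have -> : 2 * (i.+1)%:Z = ((2 * i.+1)%N)%:Z by lia.
  by rewrite -exprnP -exprM mulnS exprD.
rewrite big_add1 /= big_mkord.
have pt : forall i : 'I_M,
   (1 * q ^ ((i.+1)%:Z - 1 - 2 * b + a) + 1 * q ^ (- (i.+1)%:Z + 1 + 2 * d - a))
        * (1 - q ^ (2 * (b - d) + 2 * (i.+1)%:Z))
        / (2 * (1 - q ^ (2 * (i.+1)%:Z)))
   = 2^-1 * q ^ (2 * d - a - i%:Z) * (1 - - q ^ (2 * a - 2 * b - 2 * d) * (q ^+ 2) ^+ i)
     * (1 - q ^ (2 * b - 2 * d + 2) * (q ^+ 2) ^+ i) / (1 - q ^+ 2 * (q ^+ 2) ^+ i).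
  move=> i.
  have -> : (i.+1)%:Z - 1 - 2 * b + a
    = ((2 * d - a - i%:Z) + (2 * a - 2 * b - 2 * d)) + ((2 * i)%N)%:Z by lia.
  have -> : - (i.+1)%:Z + 1 + 2 * d - a = 2 * d - a - i%:Z by lia.
  have -> : 2 * (b - d) + 2 * (i.+1)%:Z = (2 * b - 2 * d + 2) + ((2 * i)%N)%:Z by lia.
  have -> : 2 * (i.+1)%:Z = ((2 * i.+1)%N)%:Z by lia.
  rewrite -exprnP qadd // qadd // expfzDr // mulnS exprD -!exprM.
  have hDi : 1 - q ^+ 2 * q ^+ (2 * i) != 0 by rewrite exprM; exact: hD.
  field; by rewrite hDi h2.
rewrite (eq_bigr _ (fun i _ => pt i)) prodf_div !big_split /= prodr_const card_ord.
rewrite (prod_qz hq M (fun i : nat => 2 * d - a - i%:Z)) /qpoch.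
have -> : (2 : F) ^ (a - c) = 2^-1 ^+ M.
  by rewrite exprVn exprnN; congr (_ ^ _); lia.
have S2 := sumi (2 * d - a) M.
have -> : (((a - c) * (a + c - 1 - 4 * d)) %/ 2)%Z = \sum_(i < M) (2 * d - a - i%:Z).
  have -> : (a - c) * (a + c - 1 - 4 * d) = (\sum_(i < M) (2 * d - a - i%:Z)) * 2.
    rewrite [RHS]mulrC S2 hM; ring.
  by rewrite mulzK.
by [].
Qed.
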